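(* Let $A,B$ be invertible positive bounded linear operators on a complex Hilbert space with $0<A\leq B$. Then $$3(A-B)+BA^{-1}B-AB^{-1}A\geq 0.$$
   Context: An operator $X$ is positive ($X\ge0$) if it is self-adjoint and $\langle x, Xx\rangle\ge0$ for all vectors $x$; $X\le Y$ means $Y-X\ge0$, and $0<A$ means $A$ is positive and invertible. *)

(* Defs.v *)
(* A complex Hilbert space is modelled as a vector space V
   (lmodType) over a numeric algebraically closed field C (numClosedFieldType,
   the MathComp abstraction of the complex numbers), equipped with an inner
   product (linear in the 2nd argument, conjugate-symmetric, positive definite)
   for which V is complete w.r.t. the induced norm. *)
From HB Require Import structures.
From mathcomp Require Import all_boot all_order all_algebra.
Set Implicit Arguments. Unset Strict Implicit. Unset Printing Implicit Defensive.
Import Order.TTheory GRing.Theory Num.Theory.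
Local Open Scope ring_scope.

Section Hilbert.
Variables (C : numClosedFieldType) (V : lmodType C) (ip : V -> V -> C).

Record inner_product : Prop := InnerProduct {
  ip_linr : forall (a : C) (x y z : V), ip x (a *: y + z) = a * ip x y + ip x z;
  ip_conj : forall x y : V, ip x y = (ip y x)^*;
  ip_ge0  : forall x : V, 0 <= ip x x;
  ip_eq0  : forall x : V, ip x x = 0 -> x = 0 }.

Definition ipnorm (x : V) : C := sqrtC (ip x x).

Definition complete : Prop :=
  forall u : nat -> V,
    (forall e : C, 0 < e -> exists N : nat, forall m n : nat,
        (N <= m)%N -> (N <= n)%N -> ipnorm (u m - u n) < e) ->
    exists l : V, forall e : C, 0 < e -> exists N : nat, forall n : nat,
        (N <= n)%N -> ipnorm (u n - l) < e.

Definition linear_op (T : V -> V) : Prop :=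
  forall (a : C) (x y : V), T (a *: x + y) = a *: T x + T y.

Definition bounded_op (T : V -> V) : Prop :=
  linear_op T /\ exists M : C, 0 <= M /\ forall x : V, ipnorm (T x) <= M * ipnorm x.

Definition selfadjoint (T : V -> V) : Prop :=
  forall x y : V, ip (T x) y = ip x (T y).

Definition positive_op (T : V -> V) : Prop :=
  selfadjoint T /\ forall x : V, 0 <= ip x (T x).

Definition op_le (S T : V -> V) : Prop := positive_op (fun x => T x - S x).

Definition is_inverse_op (T Ti : V -> V) : Prop :=
  bounded_op Ti /\ cancel T Ti /\ cancel Ti T.

End Hilbert.

(* Main.v *)
Require Import Defs.
From HB Require Import structures.
From mathcomp Require Import all_boot all_order all_algebra.
Import Order.TTheory GRing.Theory Num.Theory.
Local Open Scope ring_scope.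

Lemma grp (C : numClosedFieldType) (V : lmodType C) (a b p q : V) :
  3 *: (a - b) + p - q = p - b - (b - a) - (b - a - (a - q)).
Proof.
rewrite scaler_nat !mulrS mulr0n addr0.
rewrite !opprB !addrA.
rewrite -!addrA.
rewrite [in RHS](addrCA (-q) a).
rewrite !(addrCA _ p); congr (_ + _).
rewrite [in RHS](addrC (-q)).
rewrite (addrCA a (-b)); congr (_ + _).
rewrite !(addrCA _ a); congr (_ + _).
Qed.

Section Aux.
Variables (C : numClosedFieldType) (V : lmodType C) (ip : V -> V -> C).
Hypothesis hip : inner_product ip.

Lemma lin0 (T : V -> V) : linear_op T -> T 0 = 0.
Proof.
move=> hT; have := hT (-1) 0 0.
by rewrite scaler0 addr0 scaleN1r addNr.
Qed.

Lemma linD (T : V -> V) : linear_op T -> forall x y, T (x + y) = T x + T y.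
Proof. by move=> hT x y; have := hT 1 x y; rewrite !scale1r. Qed.

Lemma linN (T : V -> V) : linear_op T -> forall x, T (- x) = - T x.
Proof.
move=> hT x; have := hT (-1) x 0.
by rewrite !scaleN1r !addr0 (lin0 _ hT) addr0.
Qed.

Lemma linB (T : V -> V) : linear_op T -> forall x y, T (x - y) = T x - T y.
Proof. by move=> hT x y; rewrite (linD _ hT) (linN _ hT). Qed.

Lemma ipr0 x : ip x 0 = 0.
Proof.
have := ip_linr hip (-1) x 0 0.
by rewrite scaleN1r addr0 oppr0 mulN1r addNr.
Qed.

Lemma iprD x y z : ip x (y + z) = ip x y + ip x z.
Proof. by have := ip_linr hip 1 x y z; rewrite scale1r mul1r. Qed.

Lemma iprN x y : ip x (- y) = - ip x y.
Proof.
have := ip_linr hip (-1) x y 0.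
by rewrite scaleN1r addr0 ipr0 addr0 mulN1r.
Qed.

Lemma iprB x y z : ip x (y - z) = ip x y - ip x z.
Proof. by rewrite iprD iprN. Qed.

Lemma iplD x y z : ip (y + z) x = ip y x + ip z x.
Proof. by rewrite (ip_conj hip y x) (ip_conj hip z x) [LHS](ip_conj hip) iprD [LHS]raddfD. Qed.

Lemma iplN x y : ip (- y) x = - ip y x.
Proof. by rewrite (ip_conj hip y x) [LHS](ip_conj hip) iprN [LHS]raddfN. Qed.

Lemma iplB x y z : ip (y - z) x = ip y x - ip z x.
Proof. by rewrite iplD iplN. Qed.

Lemma inv_sa (T Ti : V -> V) : selfadjoint ip T -> cancel T Ti -> cancel Ti T ->
  selfadjoint ip Ti.
Proof.
move=> hT c1 c2 x y.
by rewrite -{2}(c2 x) hT c2.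
Qed.

End Aux.
Arguments linB {C V T} _ _ _.
Arguments iprB {C V ip} _ _ _ _.
Arguments iplB {C V ip} _ _ _ _.
Arguments inv_sa {C V ip T Ti} _ _ _ _ _.

Theorem mainTheorem9 (C : numClosedFieldType) (V : lmodType C)
    (ip : V -> V -> C) (hip : inner_product ip) (hcomplete : complete ip)
    (A B Ai Bi : V -> V)
    (hA : bounded_op ip A) (hB : bounded_op ip B)
    (hApos : positive_op ip A) (hBpos : positive_op ip B)
    (hAi : is_inverse_op ip A Ai) (hBi : is_inverse_op ip B Bi)
    (hAB : op_le ip A B) :
  positive_op ip (fun x => 3 *: (A x - B x) + B (Ai (B x)) - A (Bi (A x))).
Proof.
case: hA => lA _; case: hB => lB _.
case: hAi => [[lAi _] [cA1 cA2]]; case: hBi => [[lBi _] [cB1 cB2]].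
case: hApos => saA pA; case: hBpos => saB pB.
case: hAB => saD pD.
have saAi := inv_sa saA cA1 cA2.
have saBi := inv_sa saB cB1 cB2.
pose D x := B x - A x.
pose G x := Ai x - Bi x.
have saG : selfadjoint ip G.
  move=> x y; rewrite /G (iplB hip) (iprB hip) saAi saBi //.
have pG : forall z, 0 <= ip z (G z).
  move=> z; rewrite /G (iprB hip) subr_ge0.
  set u := Ai z; set v := Bi z.
  have Au : A u = z by rewrite /u cA2.
  have Bv : B v = z by rewrite /v cB2.
  have h1 := pA (u - v).
  rewrite (linB lA) Au (iplB hip) !(iprB hip) in h1.
  have e1 : ip u z = ip z u by rewrite -{1}Au -saA Au.
  have e2 : ip u (A v) = ip z v by rewrite -saA Au.
  have e3 : ip v z = ip z v by rewrite -{1}Bv -saB Bv.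
  have h2 := pD v; rewrite (iprB hip) Bv subr_ge0 in h2.
  rewrite e1 e2 e3 in h1; rewrite e3 in h2.
  rewrite -subr_ge0.
  have -> : ip z u - ip z v = (ip z u - ip z v - (ip z v - ip v (A v))) + (ip z v - ip v (A v)).
    by rewrite subrK.
  by apply: addr_ge0 => //; rewrite subr_ge0.
have eF : forall x, 3 *: (A x - B x) + B (Ai (B x)) - A (Bi (A x)) = D (G (D x)).
  move=> x; rewrite /D /G !(linB lAi) !(linB lBi) cA1 cB1 !(linB lA) !(linB lB).
  by rewrite cA2 cB2 grp.
split.
  move=> x y; rewrite !eF.
  by rewrite saD saG saD.
by move=> x; rewrite eF -saD; apply: pG.
Qed.
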